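(* Let $n\ge1$, $\mathbf{k}=(k_1,\dots,k_n)$ positive integers, $D\in\mathcal{D}_{\mathbf{k}}$ and $T=T(D)$. Then the Ranking Algorithm assigns every index of $T$ a rank; that is, for each $i=2,\dots,n$, when column $i$ is processed, the index $t_i-1$ (where $t_i$ is the top index of column $i$) has already been assigned a rank.
   Context: $|\mathbf{k}|=k_1+\cdots+k_n$, $N=n+|\mathbf{k}|$. $\mathcal{D}_{\mathbf{k}}$: sequences $(a_1,\dots,a_N)$ whose positive entries are $k_1,\dots,k_n$ in order, other entries $-1$, all partial sums $a_1+\cdots+a_{i-1}\ge0$. SW-word: $S^{k_j}$ for up step $k_j$, $W$ for $-1$. Filling Algorithm producing $T(D)$: $n$ columns, column $i$ with $k_i+1$ cells in rows $1,\dots,k_i+1$; place $1$ at top of column 1; having placed $1,\dots,i-1$, the lowest filled entry of column $j$ is active if not in row $k_j+1$; if the $i$-th letter is $W$ place $i$ below the smallest active entry, otherwise at the top of the leftmost empty column; continue until $1,\dots,N$ are placed. Entries of $T$ are called indices. Ranking Algorithm: assign ranks $0,1,\dots,k_1$ to the column-1 indices from top to bottom; for $i$ from $2$ to $n$, if the top index of column $i$ is $A+1$ and index $A$ has rank $a$, assign the indices of column $i$ ranks $a,a+1,\dots,a+k_i$ from top to bottom. *)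

(* Defs.v *)
From mathcomp Require Import all_boot all_order all_algebra.
Set Implicit Arguments. Unset Strict Implicit. Unset Printing Implicit Defensive.
Import GRing.Theory Num.Theory.
Local Open Scope ring_scope.

(* Columns are 0-indexed: column j (0 <= j < n) of the paper is column j+1.
   k : seq nat is (k_1,...,k_n); a sequence D : seq int is (a_1,...,a_N). *)

Definition in_Dk (k : seq nat) (D : seq int) : Prop :=
  [/\ size D = (size k + sumn k)%N,
      [seq x <- D | 0 < x] = [seq Posz kj | kj <- k],
      all (fun x => (0 < x) || (x == -1)) D &
      forall i : nat, (i < size D)%N -> 0 <= \sum_(x <- take i D) x].

(* A tableau (during/after filling): a list of n columns, each column listing
   its filled entries from top (row 1) downwards. *)
Definition tableau := seq (seq nat).

Definition argmin (f : nat -> nat) (s : seq nat) : nat :=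
  foldl (fun b j => if (f j < f b)%N then j else b) (head 0%N s) s.

(* columns whose lowest filled entry is active: column nonempty and its
   lowest entry is not in row k_j + 1 (i.e. the column is not full) *)
Definition active_cols (k : seq nat) (T : tableau) : seq nat :=
  [seq j <- iota 0 (size k) |
     (nth [::] T j != [::]) && (size (nth [::] T j) < (nth 0%N k j).+1)%N].

(* one step of the Filling Algorithm: place index i with letter x
   (x > 0 means letter S^{x}, x = -1 means letter W) *)
Definition fill_step (k : seq nat) (T : tableau) (ix : nat * int) : tableau :=
  let: (i, x) := ix in
  if 0 < x then
    set_nth [::] T (find (fun c : seq nat => c == [::]) T) [:: i]
  else
    let act := active_cols k T in
    if act is [::] then T (* cannot happen for D in D_k *)
    else
      let j := argmin (fun j => last 0%N (nth [::] T j)) act in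
      set_nth [::] T j (rcons (nth [::] T j) i).

Definition filling (k : seq nat) (D : seq int) : tableau :=
  foldl (fill_step k) (set_nth [::] (nseq (size k) [::]) 0 [:: 1%N])
        (zip (iota 2 (size D).-1) (behead D)).

(* Main.v *)
Require Import Defs.
From mathcomp Require Import all_boot all_order all_algebra.
Local Open Scope ring_scope.
Import GRing.Theory Num.Theory.

Lemma sum_Posz (l : seq nat) : \sum_(x <- map Posz l) x = (sumn l)%:Z.
Proof. by elim: l => [|a l IH]; rewrite ?big_nil // big_cons IH /= PoszD. Qed.

Lemma sum_split (s : seq int) : all (fun x => (0 < x) || (x == -1)) s ->
  \sum_(x <- s) x = \sum_(x <- [seq x <- s | 0 < x]) x - (count (fun x => ~~ (0 < x)) s)%:Z.
Proof.
elim: s => [|a s IH]; first by rewrite !big_nil.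
rewrite /= => /andP[Ha Hs]; rewrite big_cons IH //.
case: ifP => Hp; rewrite ?big_cons /=; try rewrite Hp.

  by rewrite add0n addrA.
move: Ha; rewrite Hp /= => /eqP ->.
by rewrite PoszD opprD !addrA (addrC (-1)).
Qed.

Lemma filter_take (k : seq nat) (D : seq int) p :
  [seq x <- D | 0 < x] = [seq Posz kj | kj <- k] ->
  [seq x <- take p D | 0 < x] = map Posz (take (count (fun x => 0 < x) (take p D)) k).
Proof.
move=> HF; rewrite map_take -HF -{3}(cat_take_drop p D) filter_cat.
by rewrite take_size_cat // size_filter.
Qed.

Lemma count_D (k : seq nat) (D : seq int) :
  [seq x <- D | 0 < x] = [seq Posz kj | kj <- k] ->
  count (fun x => 0 < x) D = size k.
Proof. by move=> HF; rewrite -size_filter HF size_map. Qed.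

Lemma total_sum (k : seq nat) (D : seq int) : in_Dk k D -> \sum_(x <- D) x = 0.
Proof.
case=> Hs HF Ha _; rewrite sum_split // HF sum_Posz.
have := count_predC (fun x : int => 0 < x) D; rewrite (@count_D k D HF) Hs.
move=> H; have -> : count (fun x : int => ~~ (0 < x)) D = sumn k.
  by apply/eqP; rewrite -(eqn_add2l (size k)) H.
by rewrite subrr.
Qed.

Lemma prefix_nonneg (k : seq nat) (D : seq int) p : in_Dk k D -> 0 <= \sum_(x <- take p D) x.
Proof.
move=> H; case: (ltnP p (size D)) => Hp; first by case: H => _ _ _ ->.
by rewrite take_oversize // (@total_sum k D H).
Qed.

Definition cnt (D : seq int) p := count (fun x : int => 0 < x) (take p D).

Definition Inv (k : seq nat) (D : seq int) p (S : tableau) : Prop :=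
  [/\ size S = size k,
      forall j, (nth [::] S j != [::]) = (j < cnt D p)%N,
      forall j, (j < cnt D p)%N -> (size (nth [::] S j) <= (nth 0%N k j).+1)%N,
      \sum_(x <- take p D) x =
        (\sum_(0 <= j < cnt D p) ((nth 0%N k j).+1 - size (nth [::] S j)))%N%:Z
    & (exists2 j, (j < cnt D p)%N & p \in nth [::] S j) /\
      (forall i, (0 < i < cnt D p)%N -> exists2 j, (j < i)%N &
          (head 0%N (nth [::] S i)).-1 \in nth [::] S j)].

Lemma foldl_in (f : nat -> nat) (P : pred nat) z s : P z -> all P s ->
  P (foldl (fun b j => if (f j < f b)%N then j else b) z s).
Proof.
elim: s z => [|b s IH] z //= Hz /andP[Hb Hs].
by apply: IH => //; case: ifP.
Qed.

Lemma argmin_in (f : nat -> nat) s : s != [::] -> argmin f s \in s.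
Proof.
case: s => [|a s] // _; rewrite /argmin /=.
apply: (@foldl_in f (fun y => y \in a :: s)) => /=.
  by rewrite ltnn inE eqxx.
by apply/allP => y Hy; rewrite inE Hy orbT.
Qed.

Lemma cnt_le (k : seq nat) (D : seq int) p : in_Dk k D -> (cnt D p <= size k)%N.
Proof.
case=> _ HF _ _; rewrite /cnt -(@count_D k D HF) -{2}(cat_take_drop p D) count_cat.
exact: leq_addr.
Qed.

Lemma step_inv (k : seq nat) (D : seq int) p S : in_Dk k D -> (0 < p < size D)%N ->
  Inv k D p S -> Inv k D p.+1 (fill_step k S (p.+1, nth 0 D p)).
Proof.
move=> HD /andP[p0 pN] [Hsz Hne Hsize Hsum [He Hf]].
have HD' := HD; case: HD' => _ HF Hall _.
set x := nth 0 D p.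
have Htake : take p.+1 D = rcons (take p D) x := take_nth 0 pN.
have Hcnt : cnt D p.+1 = (cnt D p + nat_of_bool (0 < x)%R)%N.
  by rewrite /cnt Htake -cats1 count_cat /= addn0.
have Hsum' : \sum_(y <- take p.+1 D) y = \sum_(y <- take p D) y + x.
  by rewrite Htake -cats1 big_cat big_seq1.
have Hcn := @cnt_le k D p.+1 HD.
have HxD : (0 < x) || (x == -1) by move/allP: Hall; apply; rewrite mem_nth.
set c := cnt D p in Hne Hsize Hsum He Hf Hcnt.
rewrite /fill_step; case: ifP => Hx.
- rewrite Hx /= in Hcnt; rewrite /Inv Hcnt.
  have Hc : (c < size k)%N by rewrite -addn1 -Hcnt.
  have Hnc : nth [::] S c == [::] by apply: negbFE; rewrite Hne ltnn.
  have Hhas : has (fun c => c == [::]) S.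
    by apply/(has_nthP [::]); exists c; rewrite ?Hsz.
  have Hfind : find (fun c => c == [::]) S = c.
    have := nth_find [::] Hhas; set f := find _ _ => Hf1.
    apply/eqP; rewrite eqn_leq; apply/andP; split.
      rewrite leqNgt; apply/negP => Hlt.
      by have := before_find [::] Hlt; rewrite Hnc.
    by rewrite leqNgt -Hne Hf1.
  have HxK : x = Posz (nth 0%N k c).
    have := @filter_take k D p.+1 HF; rewrite -/(cnt D p.+1) Hcnt addn1.
    rewrite (take_nth 0%N Hc) map_rcons Htake filter_rcons Hx.
    by rewrite (@filter_take k D p HF) -/(cnt D p) => /rcons_inj [].
  rewrite Hfind; set S' := set_nth _ _ _ _.
  have HS' j : nth [::] S' j = if j == c then [:: p.+1] else nth [::] S j.
    by rewrite nth_set_nth.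
  split.
  + by rewrite size_set_nth Hsz; apply/maxn_idPr.
  + move=> j; rewrite HS' addn1 ltnS leq_eqVlt.
    by have [->|Hjc] := eqVneq j c => //=; rewrite ?Hne.
  + move=> j; rewrite HS' addn1 ltnS leq_eqVlt.
    by have [->|Hjc] := eqVneq j c => //= /Hsize.
  + rewrite Hsum' Hsum addn1 big_nat_recr //= HS' eqxx /= subn1 /= HxK -PoszD.
    congr (Posz (_ + _)); apply: eq_big_nat => j /andP[_ Hj].
    by rewrite HS' (ltn_eqF Hj).
  + split.
      by exists c; rewrite ?addn1 ?ltnSn // HS' eqxx mem_head.
    move=> i; rewrite addn1 ltnS => /andP[i0]; rewrite leq_eqVlt => /orP[/eqP ->|Hi].
      rewrite HS' eqxx /=; case: He => j Hj Hpj; exists j => //.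
      by rewrite HS' (ltn_eqF Hj).
    have [j Hj Hm] := Hf i (introT andP (conj i0 Hi)).
    exists j => //; rewrite !HS' (ltn_eqF Hi) (ltn_eqF (ltn_trans Hj Hi)) //.
- have Hxm : x = -1 by move: HxD; rewrite Hx /= => /eqP.
  rewrite Hx /= addn0 in Hcnt; rewrite /Inv Hcnt.
  rewrite Hcnt in Hcn.
  have Hact j : (j \in active_cols k S) = (j < c)%N && (size (nth [::] S j) < (nth 0%N k j).+1)%N.
    rewrite /active_cols mem_filter mem_iota add0n /= Hne.
    by case: (ltnP j c) => //= Hj; rewrite (leq_trans Hj Hcn) andbT.
  case HA: (active_cols k S) => [|a act'] /=.
    exfalso.
    have Hz : (\sum_(0 <= j < c) ((nth 0%N k j).+1 - size (nth [::] S j)) = 0)%N.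
      rewrite big_nat big1 // => j /andP[_ Hj].
      have := Hact j; rewrite HA in_nil Hj /= => /esym/negbT; rewrite -leqNgt => H1.
      by apply/eqP; rewrite subn_eq0.
    have := @prefix_nonneg k D p.+1 HD; rewrite Hsum' Hsum Hz Hxm.
    by [].
  set j := argmin _ _.
  have : j \in active_cols k S by rewrite HA; apply: argmin_in.
  rewrite Hact => /andP[Hjc Hjs].
  set S' := set_nth _ _ _ _.
  have HS' j' : nth [::] S' j' = if j' == j then rcons (nth [::] S j) p.+1 else nth [::] S j'.
    by rewrite nth_set_nth.
  have Hsub j' : {subset nth [::] S j' <= nth [::] S' j'}.
    move=> y Hy; rewrite HS'; case: (j' =P j) => [E|//]; by rewrite mem_rcons in_cons -E Hy orbT.
  have Hhd j' : nth [::] S j' != [::] -> head 0%N (nth [::] S' j') = head 0%N (nth [::] S j').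
    rewrite HS'; case: (j' =P j) => [E|//]; rewrite -E; by case: (nth [::] S j').
  split.
  + rewrite size_set_nth Hsz; apply/maxn_idPr.
    exact: leq_trans Hjc Hcn.
  + move=> j'; rewrite HS'.
    case: (j' =P j) => [->|_]; [by rewrite -size_eq0 size_rcons Hjc | exact: Hne].
  + move=> j'; rewrite HS'.
    case: (j' =P j) => [->|_] Hj'; [by rewrite size_rcons | exact: Hsize].
  + rewrite Hsum' Hsum Hxm.
    have Hin : j \in index_iota 0 c by rewrite mem_index_iota.
    have Hu : uniq (index_iota 0 c) by rewrite /index_iota iota_uniq.
    rewrite (bigD1_seq j Hin Hu) [in RHS](bigD1_seq j Hin Hu) /= HS' eqxx size_rcons.
    rewrite [in RHS](eq_bigr (fun j' => (nth 0%N k j').+1 - size (nth [::] S j'))%N); last first.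
      by move=> j' Hj'; rewrite HS' (negbTE Hj').
    rewrite subnS -(prednK (n := ((nth 0%N k j).+1 - size (nth [::] S j))%N)); last by rewrite subn_gt0.
    by rewrite /= addSn -addn1 PoszD addrK.
  + split.
      by exists j => //; rewrite HS' eqxx mem_rcons mem_head.
    move=> i Hi; have [j' Hj' Hm] := Hf i Hi.
    exists j' => //; rewrite Hhd ?Hne; last by case/andP: Hi.
    exact: Hsub.
Qed.

Lemma fold_inv (k : seq nat) (D : seq int) m : forall p S, in_Dk k D -> (0 < p)%N ->
  (p + m <= size D)%N -> Inv k D p S ->
  Inv k D (p + m) (foldl (fill_step k) S (zip (iota p.+1 m) (take m (drop p D)))).
Proof.
elim: m => [|m IH] p S HD p0 Hpm HI; first by rewrite addn0 take0.
have pN : (p < size D)%N by apply: leq_trans Hpm; rewrite addnS ltnS leq_addr.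
rewrite (drop_nth 0 pN) /= -addSnnS; apply: IH => //; first by rewrite addSnnS.
by apply: step_inv => //; rewrite p0.
Qed.

Lemma init_inv (k : seq nat) (D : seq int) : (0 < size k)%N -> all (fun kj => 0 < kj)%N k ->
  in_Dk k D -> Inv k D 1 (set_nth [::] (nseq (size k) [::]) 0 [:: 1%N]).
Proof.
move=> k0 kpos HD; have HD' := HD; case: HD' => Hs HF Hall Hpre.
case: D Hs HF Hall Hpre HD => [|d D'] Hs HF Hall Hpre HD.
  by move: Hs; case: (k) k0 => // a l _; rewrite /= addSn.
have Hd : 0 < d.
  have : (1 < size (d :: D'))%N.
    rewrite Hs; case: k k0 kpos {HF Hs HD} => // a l _ /= /andP[a0 _].
    by rewrite addSn ltnS addnCA ltn_addr.
  move=> /Hpre; rewrite /= take0 big_cons big_nil addr0.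
  by move: Hall => /= /andP[/orP[//|/eqP ->]].
have Hc : cnt (d :: D') 1 = 1%N by rewrite /cnt /= take0 /= Hd.
have Hdk : d = Posz (nth 0%N k 0).
  have := @filter_take k (d :: D') 1 HF; rewrite -/(cnt _ 1) Hc /= Hd.
  rewrite take0 /=; by case: (k) k0 => // a l _ /= [].

have HT j : nth [::] (set_nth [::] (nseq (size k) [::]) 0 [:: 1%N]) j =
            if j == 0%N then [:: 1%N] else [::].
  by rewrite nth_set_nth /= nth_nseq; case: (j == 0%N) => //; case: ifP.
rewrite /Inv Hc; split.
- by rewrite size_set_nth size_nseq; apply/maxn_idPr.
- by move=> j; rewrite HT; case: j.
- by move=> j; rewrite HT; case: j.
- by rewrite /= take0 big_cons big_nil addr0 big_nat1 HT /= subn1 Hdk.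
- split; last by move=> i /andP[i0 i1]; move: i1; rewrite ltnNge i0.
  by exists 0%N => //; rewrite HT mem_head.
Qed.

Theorem mainTheorem5 (k : seq nat) (D : seq int) :
  (0 < size k)%N ->
  all (fun kj => 0 < kj)%N k ->
  in_Dk k D ->
  forall i : nat, (0 < i < size k)%N ->
    nth [::] (filling k D) i != [::] /\
    exists2 j : nat, (j < i)%N &
      (head 0%N (nth [::] (filling k D) i)).-1 \in nth [::] (filling k D) j.
Proof.
move=> k0 kpos HD i Hi.
have HD' := HD; case: HD' => Hs HF Hall Hpre.
have HN : (0 < size D)%N by rewrite Hs (leq_trans k0) // leq_addr.
have := @fold_inv k D (size D).-1 1%N _ HD isT.
rewrite add1n (prednK HN) leqnn => /(_ _ isT (@init_inv k D k0 kpos HD)).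
rewrite -/(drop 1 D) take_oversize; last by rewrite size_drop subn1.
have Hb : behead D = drop 1 D by case: (D) => // a l; rewrite /= drop0.
rewrite /filling Hb.
have Hcn : cnt D (size D) = size k.
  by rewrite /cnt take_oversize // (@count_D k D HF).
rewrite /Inv Hcn => -[_ Hne _ _ [_ Hf]].
split; first by rewrite Hne; case/andP: Hi.
exact: Hf.
Qed.
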